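(* For integers $1\le N\le 50$, a $PCS_5^N$ exists if and only if $N=1$ or $N$ is divisible by $4$.
   Context: A binary sequence of length $N$ is a sequence $a=(a(0),\dots,a(N-1))$ with each $a(i)\in\{+1,-1\}$. Its periodic autocorrelation function is $\tilde\varphi_a(i)=\sum_{j=0}^{N-1}a(j)a(i+j \bmod N)$ for $0\le i<N$. A family $a_1,\dots,a_p$ of binary sequences, all of length $N$, is a $PCS_p^N$ (periodic complementary set) if $\sum_{k=1}^p\tilde\varphi_{a_k}(i)=0$ for all $0<i<N$. The sequences in a family need not be distinct. *)

(* Defs.v *)
From HB Require Import structures.
From mathcomp Require Import all_boot all_order all_algebra.
Set Implicit Arguments. Unset Strict Implicit. Unset Printing Implicit Defensive.
Import Order.TTheory GRing.Theory Num.Theory.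
Local Open Scope ring_scope.

Definition binary_seq (N : nat) (a : seq int) : bool :=
  (size a == N) && all (fun x : int => (x == 1) || (x == -1)) a.

Definition pacf (N : nat) (a : seq int) (i : nat) : int :=
  \sum_(j < N) a`_j * a`_((i + j) %% N).

(* A family a_1..a_p (indexed by 'I_p, not necessarily distinct) is a PCS_p^N. *)
Definition is_PCS (p N : nat) (A : 'I_p -> seq int) : Prop :=
  (forall k, binary_seq N (A k)) /\
  (forall i : nat, (0 < i)%N -> (i < N)%N -> \sum_(k < p) pacf N (A k) i = 0).

(* Main.v *)
Require Import Defs.
From HB Require Import structures.
From mathcomp Require Import all_boot all_order all_algebra.
Set Implicit Arguments. Unset Strict Implicit. Unset Printing Implicit Defensive.
Import Order.TTheory GRing.Theory Num.Theory.
Local Open Scope ring_scope.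

Lemma bin_elt N (a : seq int) j : binary_seq N a -> (j < N)%N -> (2 %| a`_j - 1)%Z.
Proof.
move=> /andP[/eqP sz /allP h] lt.
have := h (a`_j) (mem_nth 0 _); rewrite sz => /(_ lt) /orP[] /eqP -> //.
Qed.

Lemma shift_sum n (F : nat -> int) i :
  \sum_(j < n.+1) F ((i + j) %% n.+1)%N = \sum_(j < n.+1) F j.
Proof.
rewrite [RHS](reindex_inj (addrI (inZp i : 'I_n.+1))) /=.
apply: eq_bigr => j _; congr F.
by rewrite /= modnDml.
Qed.

Lemma id4 (x y : int) : x * y - 1 = (1 - x) * (1 - y) + (x - 1) + (y - 1).
Proof.
rewrite mulrBl !mulrBr !mul1r mulr1.
rewrite !opprB.
rewrite addrAC -!addrA.
rewrite (addrCA (-x) y) (addrCA (x*y) y) (addrA (-y) y) addNr add0r.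
rewrite (addrCA (-x) (-1)) (addKr x) (addrCA 1); congr (_ + _).
Qed.

Lemma pacf_mod4 N (a : seq int) i : binary_seq N a -> (4 %| pacf N a i - N%:R)%Z.
Proof.
move=> hb; case: N hb => [|n] hb; first by rewrite /pacf big_ord0.
have eN : (n.+1%:R : int) = \sum_(j < n.+1) 1 by rewrite sumr_const card_ord.
have e : pacf n.+1 a i - n.+1%:R =
  \sum_(j < n.+1) ((1 - a`_j) * (1 - a`_((i + j) %% n.+1))) +
  \sum_(j < n.+1) (a`_j - 1) + \sum_(j < n.+1) (a`_((i + j) %% n.+1) - 1).
  rewrite eN /pacf -sumrB -!big_split; apply: eq_bigr => j _.
  by rewrite id4.
rewrite e (shift_sum n (fun j => a`_j - 1)) -addrA.
apply: rpredD.
  apply: rpred_sum => j _; rewrite -opprB -[1 - _]opprB !mulrNN.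
  apply: (@dvdz_mul 2 2); apply: bin_elt hb _ => //.
  by rewrite ltn_mod.
rewrite -mulr2n -sumrMnl; apply: rpred_sum => j _.
apply: (@dvdz_trans (2 * 2)) => //; rewrite -[_ *+ 2]mulr_natr; apply: dvdz_mul; [exact: bin_elt hb _ | by []].
Qed.

Lemma nonex N (A : 'I_5 -> seq int) : (1 < N)%N -> is_PCS N A -> (4 %| N)%N.
Proof.
move=> N1 [hb hs].
have h0 := hs 1%N isT N1.
have : (4 %| \sum_(k < 5) (pacf N (A k) 1 - N%:R))%Z.
  by apply: rpred_sum => k _; apply: pacf_mod4.
rewrite sumrB h0 sub0r rpredN sumr_const card_ord -mulrnA.
rewrite dvdzE /= natz absz_nat => h2.
by rewrite Gauss_dvdl in h2.
Qed.

Lemma sum_foldr n (F : nat -> int) :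
  \sum_(j < n) F j = foldr (fun j acc => F j + acc) 0 (iota 0 n).
Proof.
rewrite -(big_mkord xpredT F) /index_iota subn0.
by elim: (iota 0 n) => [|x s IH]; rewrite ?big_nil ?big_cons ?IH.
Qed.

Definition pacfc N (a : seq int) i :=
  foldr (fun j acc => a`_j * a`_((i + j) %% N) + acc) 0 (iota 0 N).

Definition chk N (L : seq (seq int)) :=
  all (binary_seq N) L && (size L == 5%N) &&
  all (fun i => foldr (fun k acc => pacfc N (nth [::] L k) i + acc) 0 (iota 0 5) == 0)
      (iota 1 N.-1).

Lemma chk_ok N L : chk N L -> is_PCS N (fun k : 'I_5 => nth [::] L k).
Proof.
move=> /andP[/andP[/allP hb /eqP sz] /allP hs]; split.
  by move=> k; apply: hb; apply: mem_nth; rewrite sz.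
move=> i i0 iN.
have : i \in iota 1 N.-1 by rewrite mem_iota i0 add1n prednK // (leq_ltn_trans _ iN).
move/hs/eqP => h; apply: etrans h.
apply: (etrans (sum_foldr 5 (fun k : nat => pacf N (nth [::] L k) i))).
elim: (iota 0 5) => //= x s ->; congr (_ + _).
by rewrite /pacf /pacfc; apply: (sum_foldr N (fun j => _ * _)).
Qed.

Definition toseq (s : seq bool) : seq int := map (fun b : bool => if b then 1 else -1) s.
Definition L4 : seq (seq int) := [:: toseq [:: false; false; true; false]; toseq [:: false; false; false; false]; toseq [:: false; true; true; false]; toseq [:: false; true; false; true]; toseq [:: false; true; true; false]].
Lemma chk4 : chk 4 L4. Proof. by vm_compute. Qed.

Definition L8 : seq (seq int) := [:: toseq [:: true; true; true; true; true; false; true; false]; toseq [:: false; true; false; false; false; false; false; true]; toseq [:: true; true; false; false; true; false; false; true]; toseq [:: false; true; true; true; true; false; false; true]; toseq [:: false; true; true; false; false; false; true; false]].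
Lemma chk8 : chk 8 L8. Proof. by vm_compute. Qed.

Definition L12 : seq (seq int) := [:: toseq [:: false; false; true; false; false; false; false; true; false; true; false; false]; toseq [:: true; false; true; true; false; true; true; false; true; true; false; false]; toseq [:: true; false; true; false; true; false; true; true; false; false; false; false]; toseq [:: false; false; true; true; true; true; true; false; false; false; true; false]; toseq [:: false; false; false; false; true; true; false; false; true; true; false; false]].
Lemma chk12 : chk 12 L12. Proof. by vm_compute. Qed.

Definition L16 : seq (seq int) := [:: toseq [:: true; true; true; false; false; true; true; false; true; false; false; true; false; true; false; true]; toseq [:: false; true; false; false; false; true; false; true; true; true; false; false; false; true; true; true]; toseq [:: false; false; false; false; true; true; false; true; true; false; false; false; false; true; false; false]; toseq [:: false; false; false; true; false; true; false; true; true; false; true; true; false; false; true; false]; toseq [:: false; false; true; false; false; false; true; true; true; false; false; true; false; false; false; false]].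
Lemma chk16 : chk 16 L16. Proof. by vm_compute. Qed.

Definition L20 : seq (seq int) := [:: toseq [:: true; false; true; false; false; true; true; false; true; false; true; false; true; true; false; true; false; false; false; true]; toseq [:: true; false; false; false; false; false; true; false; false; true; true; false; false; true; false; false; false; false; true; false]; toseq [:: true; true; true; false; false; false; false; false; false; true; true; true; true; true; false; true; true; true; true; false]; toseq [:: true; true; true; true; false; true; false; true; false; false; false; true; false; true; true; true; true; false; false; true]; toseq [:: true; true; false; true; true; false; false; true; true; false; false; false; true; true; false; false; false; false; true; false]].
Lemma chk20 : chk 20 L20. Proof. by vm_compute. Qed.

Definition L24 : seq (seq int) := [:: toseq [:: true; true; true; true; false; false; false; true; true; true; false; true; true; true; false; false; true; false; false; true; true; true; true; false]; toseq [:: false; true; false; false; true; true; false; true; true; true; true; false; true; true; false; false; true; false; true; false; false; true; true; true]; toseq [:: true; false; true; false; true; false; false; true; false; false; false; false; false; false; true; false; false; false; true; true; false; true; true; true]; toseq [:: true; true; true; false; false; false; true; false; true; true; true; false; true; false; false; false; true; false; false; false; false; false; false; true]; toseq [:: false; false; false; true; true; false; false; true; false; true; false; false; false; true; false; true; false; false; true; false; true; true; false; false]].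
Lemma chk24 : chk 24 L24. Proof. by vm_compute. Qed.

Definition L28 : seq (seq int) := [:: toseq [:: true; false; true; false; true; false; true; true; false; true; false; true; true; true; true; false; false; true; true; false; false; true; true; true; false; false; true; false]; toseq [:: false; true; false; true; true; true; false; false; false; true; false; true; false; false; false; true; true; true; false; true; true; true; true; true; true; true; true; false]; toseq [:: false; false; true; true; true; false; true; true; false; false; true; true; false; false; false; false; false; true; false; false; true; false; false; true; true; false; false; false]; toseq [:: true; true; true; false; false; false; false; true; false; true; true; false; false; true; false; false; false; false; true; true; false; false; true; false; false; true; false; true]; toseq [:: true; true; false; true; false; false; true; true; false; true; false; true; true; false; true; false; true; false; false; false; false; true; true; true; true; true; true; true]].
Lemma chk28 : chk 28 L28. Proof. by vm_compute. Qed.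

Definition L32 : seq (seq int) := [:: toseq [:: false; true; false; true; false; true; false; true; true; false; false; false; false; true; true; false; true; true; true; true; true; true; true; false; false; true; true; true; false; true; true; true]; toseq [:: false; false; false; true; true; true; false; true; true; true; false; false; true; false; false; true; true; true; false; true; true; false; true; true; false; false; false; false; false; false; false; false]; toseq [:: true; true; true; false; false; false; false; false; true; true; false; true; false; false; true; false; false; true; true; true; true; false; false; true; false; true; false; true; true; false; true; false]; toseq [:: true; true; false; true; false; false; false; true; true; true; true; true; false; false; true; false; true; true; true; false; true; true; false; true; false; false; false; true; true; false; false; true]; toseq [:: true; false; true; true; false; false; true; false; true; false; true; true; true; true; false; true; true; true; true; false; true; false; true; true; false; false; true; true; true; true; false; false]].
Lemma chk32 : chk 32 L32. Proof. by vm_compute. Qed.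

Definition L36 : seq (seq int) := [:: toseq [:: true; true; true; true; true; true; true; true; true; false; true; true; false; true; false; true; false; true; true; false; false; false; false; true; true; false; false; false; true; true; false; true; false; true; false; false]; toseq [:: true; false; true; false; false; false; false; true; false; false; false; false; false; false; true; false; true; true; false; false; true; true; false; false; true; false; true; false; false; true; false; false; true; true; false; true]; toseq [:: false; true; false; false; true; true; true; false; true; true; false; false; true; false; true; true; false; true; true; false; true; true; false; true; false; true; false; false; false; false; true; true; true; false; false; false]; toseq [:: false; true; true; false; false; true; true; false; false; false; true; true; false; false; false; true; false; false; false; false; false; true; true; true; false; false; false; false; false; true; true; true; false; false; false; true]; toseq [:: true; true; true; true; false; false; false; false; false; true; true; true; false; true; true; false; true; false; true; false; true; false; true; false; true; false; false; false; true; false; false; true; true; true; true; true]].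
Lemma chk36 : chk 36 L36. Proof. by vm_compute. Qed.

Definition L40 : seq (seq int) := [:: toseq [:: true; false; false; true; false; true; true; false; true; false; false; false; true; false; true; true; false; true; false; false; false; true; false; false; true; false; true; false; true; false; true; false; false; false; true; true; true; false; true; true]; toseq [:: true; true; true; false; false; false; false; true; false; false; true; false; true; true; true; true; true; true; false; false; true; false; true; true; false; false; false; true; true; true; false; true; false; true; false; true; true; false; false; true]; toseq [:: false; false; false; false; false; true; false; false; false; false; false; false; false; true; true; false; true; false; false; false; false; true; true; true; true; true; true; true; false; false; true; true; false; true; true; true; false; false; true; true]; toseq [:: true; false; true; true; true; false; false; false; false; true; false; false; false; true; false; false; false; true; false; true; true; true; false; false; true; true; false; true; false; false; true; false; false; false; false; true; false; true; false; false]; toseq [:: true; true; false; false; false; false; true; true; false; false; false; true; false; false; true; false; false; true; false; false; false; true; true; true; false; false; true; false; false; false; false; false; false; false; true; false; true; true; true; false]].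
Lemma chk40 : chk 40 L40. Proof. by vm_compute. Qed.

Definition L44 : seq (seq int) := [:: toseq [:: false; true; false; true; true; true; false; false; true; true; false; false; true; true; false; true; true; true; false; false; false; false; true; true; false; false; true; false; true; false; true; false; false; true; false; true; true; true; true; true; true; false; true; false]; toseq [:: false; false; true; true; true; false; false; false; true; true; true; true; true; false; true; true; false; true; true; true; true; true; false; true; false; false; true; true; true; false; false; true; true; true; true; false; false; true; false; false; false; true; false; true]; toseq [:: false; true; false; true; true; true; false; true; true; false; true; true; true; true; true; true; true; true; false; true; false; true; false; false; true; true; true; true; false; true; true; true; true; true; false; true; false; false; false; true; false; false; false; false]; toseq [:: false; true; false; true; true; true; true; false; false; true; false; true; false; false; false; true; false; false; true; true; false; true; true; true; true; false; false; true; false; false; true; false; true; false; true; true; false; false; true; false; true; false; false; false]; toseq [:: false; false; true; false; false; false; true; true; false; true; true; true; false; false; false; true; true; true; true; true; false; true; true; true; true; false; true; false; true; false; false; false; true; true; true; true; false; false; false; true; true; false; true; true]].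
Lemma chk44 : chk 44 L44. Proof. by vm_compute. Qed.

Definition L48 : seq (seq int) := [:: toseq [:: false; true; true; false; true; false; true; true; false; false; false; true; true; true; false; true; true; false; true; false; true; false; true; true; true; true; false; false; false; false; false; true; true; false; false; false; false; true; true; true; true; false; true; true; false; false; true; true]; toseq [:: false; true; true; true; true; true; false; true; true; true; false; false; false; true; false; true; true; false; true; false; false; true; false; false; false; false; true; false; false; false; false; true; false; true; true; true; true; true; false; false; true; true; false; false; false; true; true; false]; toseq [:: false; false; false; true; false; false; false; false; false; true; true; false; false; false; false; true; true; false; true; true; false; false; false; false; false; true; true; true; true; true; true; true; false; false; false; true; false; false; false; true; false; true; false; true; false; false; false; false]; toseq [:: true; false; true; false; true; false; true; false; true; true; true; false; true; true; false; false; false; true; true; false; true; false; true; true; false; true; true; false; false; true; true; true; true; false; false; false; false; true; false; true; false; false; true; true; false; true; false; true]; toseq [:: false; false; true; false; true; true; true; false; true; true; true; false; true; true; false; true; true; true; false; true; false; true; false; true; true; false; true; false; false; true; true; true; true; true; false; true; true; false; true; true; false; false; true; true; false; false; false; false]].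
Lemma chk48 : chk 48 L48. Proof. by vm_compute. Qed.

Definition pick (n : nat) : seq (seq int) :=
  match n with
  | 4 => L4 | 8 => L8 | 12 => L12 | 16 => L16 | 20 => L20 | 24 => L24
  | 28 => L28 | 32 => L32 | 36 => L36 | 40 => L40 | 44 => L44 | 48 => L48
  | _ => [::] end%N.

Lemma pick_ok : all (fun n => chk n (pick n)) [:: 4; 8; 12; 16; 20; 24; 28; 32; 36; 40; 44; 48]%N.
Proof.
do 12 (apply/andP; split; first by [exact: chk4 | exact: chk8 | exact: chk12 | exact: chk16 | exact: chk20 | exact: chk24 | exact: chk28 | exact: chk32 | exact: chk36 | exact: chk40 | exact: chk44 | exact: chk48]).
by [].
Qed.

Local Close Scope ring_scope.

Theorem proposition4 (N : nat) :
  (1 <= N <= 50)%N ->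
  ((exists A : 'I_5 -> seq int, is_PCS N A) <-> (N = 1%N \/ (4 %| N)%N)).
Proof.
move=> /andP[N1 N50]; split.
  case=> A hA; case: (ltnP 1 N) => h.
    by right; exact: nonex hA.
  by left; apply/eqP; rewrite eqn_leq h N1.
case=> [->|h4].
  exists (fun _ => [:: 1%R]); split => //.
  by move=> i i0 i1; move: i0; rewrite lt0n -leqn0 -ltnS i1.
have hin : N \in [:: 4; 8; 12; 16; 20; 24; 28; 32; 36; 40; 44; 48].
  have e : [seq n <- iota 0 51 | (4 %| n) && (0 < n)] =
           [:: 4; 8; 12; 16; 20; 24; 28; 32; 36; 40; 44; 48] by [].
  by rewrite -e mem_filter h4 N1 mem_iota.
exists (fun k : 'I_5 => nth [::] (pick N) k); apply: chk_ok.
exact: (allP pick_ok N hin).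
Qed.
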